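(* For every real $t$ with $1\leq t\leq n$: $S(t)>0$ if and only if $t>\vartheta^+(G)$.
   Context: Let $G$ be a simple graph with vertex set $V=\{1,\dots,n\}$, edge set $E$ and adjacency matrix $A$. Let $e$ be the all-ones vector, $\langle M,N\rangle=\operatorname{trace}(M^TN)$, and $X\geq 0$ mean entrywise nonnegativity. For real $t$ with $1\leq t\leq n$, $Q(t)$ is the semidefinite program $$\min \tfrac12\langle A,X\rangle\ \text{ s.t. } X\succeq 0,\ X\geq 0,\ \operatorname{trace}(X)=t,\ Xe=t\operatorname{diag}(X)$$ over symmetric $n\times n$ matrices $X$, and $S(t)$ denotes its optimal value. Schrijver's number is $$\vartheta^+(G)=\max\ \operatorname{trace}(X)\ \text{ s.t. } X-xx^T\succeq 0,\ \operatorname{diag}(X)=x,\ X_{i,j}=0\ \forall [i,j]\in E,\ X\geq 0.$$ *)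

(* Defs.v *)
From HB Require Import structures.
From mathcomp Require Import all_boot all_order all_algebra.
From mathcomp Require Import classical_sets reals.
Set Implicit Arguments. Unset Strict Implicit. Unset Printing Implicit Defensive.
Import Order.TTheory GRing.Theory Num.Theory.
Local Open Scope ring_scope.
Local Open Scope classical_set_scope.

Definition simple_graph (n : nat) (E : rel 'I_n) : Prop :=
  symmetric E /\ irreflexive E.

Definition adjmx (R : realType) (n : nat) (E : rel 'I_n) : 'M[R]_n :=
  \matrix_(i, j) (E i j)%:R.

Definition psd (R : realType) (n : nat) (X : 'M[R]_n) : Prop :=
  X^T = X /\ forall v : 'cV[R]_n, 0 <= (v^T *m X *m v) 0 0.

Definition entrywise_nonneg (R : realType) (n : nat) (X : 'M[R]_n) : Prop :=
  forall i j, 0 <= X i j.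

Definition frob (R : realType) (n : nat) (M N : 'M[R]_n) : R := \tr (M^T *m N).

Definition diagv (R : realType) (n : nat) (X : 'M[R]_n) : 'cV[R]_n :=
  \col_i X i i.

Definition onesv (R : realType) (n : nat) : 'cV[R]_n := const_mx 1.

Definition Q_feasible (R : realType) (n : nat) (t : R) (X : 'M[R]_n) : Prop :=
  X^T = X /\ psd X /\ entrywise_nonneg X /\ \tr X = t /\
  X *m onesv R n = t *: diagv X.

Definition S_val (R : realType) (n : nat) (E : rel 'I_n) (t : R) : R :=
  inf [set v : R | exists X : 'M[R]_n,
        Q_feasible t X /\ v = 2^-1 * frob (adjmx R E) X].

Definition theta_plus_feasible (R : realType) (n : nat) (E : rel 'I_n)
    (X : 'M[R]_n) (x : 'cV[R]_n) : Prop :=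
  X^T = X /\ psd (X - x *m x^T) /\ diagv X = x /\
  (forall i j, E i j -> X i j = 0) /\ entrywise_nonneg X.

Definition theta_plus (R : realType) (n : nat) (E : rel 'I_n) : R :=
  sup [set v : R | exists (X : 'M[R]_n) (x : 'cV[R]_n),
        theta_plus_feasible E X x /\ v = \tr X].

Arguments S_val R {n} E t.
Arguments theta_plus R {n} E.

(* Main.v *)
Require Import Defs.
From HB Require Import structures.
From mathcomp Require Import all_boot all_order all_algebra.
From mathcomp Require Import classical_sets reals.
From mathcomp Require Import ring lra.
Import Order.TTheory GRing.Theory Num.Theory.
Local Open Scope ring_scope.

Definition bilF {R : realType} {n : nat} (F : 'I_n -> 'I_n -> R) (u v : 'I_n -> R) : R :=
  \sum_i \sum_j u i * F i j * v j.

Definition bil {R : realType} {n : nat} (X : 'M[R]_n) := bilF (fun i j => X i j).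

Lemma bil_mx {R : realType} {n : nat} (F : 'I_n -> 'I_n -> R) u v :
  bil (\matrix_(i, j) F i j) u v = bilF F u v.
Proof.
rewrite /bil /bilF; apply: eq_bigr => i _; apply: eq_bigr => j _; by rewrite mxE.
Qed.

Lemma bilF_lin_l {R : realType} {n : nat} (F : 'I_n -> 'I_n -> R) (a b : R) (u w v : 'I_n -> R) :
  bilF F (fun i => a * u i + b * w i) v = a * bilF F u v + b * bilF F w v.
Proof.
rewrite /bilF !mulr_sumr -big_split /=; apply: eq_bigr => i _.
rewrite !mulr_sumr -big_split /=; apply: eq_bigr => j _; ring.
Qed.

Lemma bilF_sym {R : realType} {n : nat} (F : 'I_n -> 'I_n -> R) (u v : 'I_n -> R) :
  (forall i j, F i j = F j i) -> bilF F u v = bilF F v u.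
Proof.
move=> hs; rewrite /bilF exchange_big /=; apply: eq_bigr => i _.
apply: eq_bigr => j _; rewrite hs; ring.
Qed.

Lemma bilF_lin_r {R : realType} {n : nat} (F : 'I_n -> 'I_n -> R) (a b : R) (u w v : 'I_n -> R) :
  bilF F v (fun i => a * u i + b * w i) = a * bilF F v u + b * bilF F v w.
Proof.
rewrite /bilF !mulr_sumr -big_split /=; apply: eq_bigr => i _.
rewrite !mulr_sumr -big_split /=; apply: eq_bigr => j _; ring.
Qed.

Lemma quad_disc {R : realType} (A B C : R) : 0 <= C ->
  (forall x, 0 <= A + 2 * x * B + x ^+ 2 * C) -> B ^+ 2 <= A * C.
Proof.
move=> hC H; have hA : 0 <= A by have := H 0; lra.
case: (ltrgt0P C) hC => // [hCp|hC0] _.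
- have := H (- B / C); set x := - B / C => hx.
  have e : x * C = - B by rewrite /x mulrAC -mulrA divff ?mulr1 // gt_eqF.
  nra.
- rewrite hC0 mulr0; case: (eqVneq B 0) => [->|hB]; first by rewrite expr0n.
  have := H (- (A + 1) / (2 * B)); rewrite hC0 mulr0 addr0.
  have -> : 2 * (- (A + 1) / (2 * B)) * B = - (A + 1).
    by field; rewrite hB.
  lra.
Qed.

Lemma bilF_CS {R : realType} {n : nat} (F : 'I_n -> 'I_n -> R) (u v : 'I_n -> R) :
  (forall i j, F i j = F j i) -> (forall w, 0 <= bilF F w w) ->
  bilF F u v ^+ 2 <= bilF F u u * bilF F v v.
Proof.
move=> hs hp; apply: quad_disc => // x.
have := hp (fun i => 1 * u i + x * v i).
rewrite bilF_lin_l !bilF_lin_r (bilF_sym F v u hs).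
have -> : 1 * (1 * bilF F u u + x * bilF F u v) + x * (1 * bilF F u v + x * bilF F v v)
  = bilF F u u + 2 * x * bilF F u v + x ^+ 2 * bilF F v v by ring.
done.
Qed.

Lemma bilF_add {R : realType} {n : nat} (F G : 'I_n -> 'I_n -> R) u v :
  bilF (fun i j => F i j + G i j) u v = bilF F u v + bilF G u v.
Proof.
rewrite /bilF -big_split; apply: eq_bigr => i _; rewrite -big_split.
by apply: eq_bigr => j _ /=; ring.
Qed.

Lemma bilF_scale {R : realType} {n : nat} (k : R) (F : 'I_n -> 'I_n -> R) u v :
  bilF (fun i j => k * F i j) u v = k * bilF F u v.
Proof.
rewrite /bilF mulr_sumr; apply: eq_bigr => i _; rewrite mulr_sumr.
by apply: eq_bigr => j _ /=; ring.
Qed.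

Lemma sum_pick {R : realType} {n : nat} (F : 'I_n -> R) (j : 'I_n) :
  \sum_l F l * (l == j)%:R = F j.
Proof.
rewrite (bigD1 j) //= eqxx mulr1 big1 ?addr0 // => l /negbTE ->; by rewrite mulr0.
Qed.

Lemma sum_pick' {R : realType} {n : nat} (F : 'I_n -> R) (j : 'I_n) :
  \sum_l (j == l)%:R * F l = F j.
Proof.
rewrite -[RHS](sum_pick F j); apply: eq_bigr => l _; rewrite eq_sym; ring.
Qed.

Lemma bilF_diag {R : realType} {n : nat} (d : 'I_n -> R) u v :
  bilF (fun i j => d i * (i == j)%:R) u v = \sum_i u i * d i * v i.
Proof.
rewrite /bilF; apply: eq_bigr => i _.
rewrite -[RHS](sum_pick (fun j => u i * d i * v j) i).
by apply: eq_bigr => j _ /=; rewrite eq_sym; ring.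
Qed.

Lemma bilF_rank1 {R : realType} {n : nat} (f g : 'I_n -> R) u v :
  bilF (fun i j => f i * g j) u v = (\sum_i u i * f i) * (\sum_j g j * v j).
Proof.
rewrite /bilF mulr_suml; apply: eq_bigr => i _; rewrite mulr_sumr.
by apply: eq_bigr => j _ /=; ring.
Qed.

Lemma bilF_conj {R : realType} {n : nat} (s : 'I_n -> R) (F : 'I_n -> 'I_n -> R) u v :
  bilF (fun i j => s i * F i j * s j) u v = bilF F (fun i => s i * u i) (fun j => s j * v j).
Proof. rewrite /bilF; apply: eq_bigr => i _; apply: eq_bigr => j _; ring. Qed.

Lemma bilF_delta {R : realType} {n : nat} (F : 'I_n -> 'I_n -> R) (i : 'I_n) v :
  bilF F (fun k => (k == i)%:R) v = \sum_j F i j * v j.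
Proof.
rewrite /bilF exchange_big /=; apply: eq_bigr => j _.
rewrite -[RHS](sum_pick (fun k => F k j * v j) i).
by apply: eq_bigr => k _; ring.
Qed.

Lemma bilF_delta2 {R : realType} {n : nat} (F : 'I_n -> 'I_n -> R) (i j : 'I_n) :
  bilF F (fun k => (k == i)%:R) (fun k => (k == j)%:R) = F i j.
Proof. by rewrite bilF_delta sum_pick. Qed.

Lemma le_sum_term {R : realType} {n : nat} (F : 'I_n -> R) (i : 'I_n) :
  (forall k, 0 <= F k) -> F i <= \sum_k F k.
Proof. move=> h; rewrite (bigD1 i) //= lerDl; exact: sumr_ge0. Qed.

Lemma qf_mx {R : realType} {n : nat} (X : 'M[R]_n) (v : 'cV[R]_n) :
  (v^T *m X *m v) 0 0 = bil X (fun i => v i 0) (fun i => v i 0).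
Proof.
rewrite /bil /bilF mxE; under eq_bigr => j _ do rewrite mxE mulr_suml.
rewrite exchange_big /=; apply: eq_bigr => i _; apply: eq_bigr => j _.
by rewrite !mxE.
Qed.

Lemma psdP {R : realType} {n : nat} (X : 'M[R]_n) :
  psd X <-> (forall i j, X i j = X j i) /\ forall v, 0 <= bil X v v.
Proof.
split.
- case=> hT hq; split.
    by move=> i j; rewrite -{1}hT mxE.
  move=> v; have := hq (\col_i v i); rewrite qf_mx.
  congr (_ <= _); rewrite /bil /bilF; apply: eq_bigr => i _; apply: eq_bigr => j _.
  by rewrite !mxE.
- case=> hs hq; split.
    by apply/matrixP => i j; rewrite mxE hs.
  by move=> v; rewrite qf_mx.
Qed.

Lemma QfP {R : realType} {n : nat} (t : R) (X : 'M[R]_n) :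
  Q_feasible t X <->
  [/\ (forall i j, X i j = X j i), (forall v, 0 <= bil X v v),
      (forall i j, 0 <= X i j), \sum_i X i i = t &
      forall i, \sum_j X i j = t * X i i].
Proof.
split.
- case=> hT [/psdP [hs hp] [hn [htr he]]]; split => //.
  move=> i; move/matrixP: he => /(_ i 0); rewrite !mxE => <-.
  by apply: eq_bigr => j _; rewrite !mxE mulr1.
- case=> hs hp hn htr he; split; first by apply/matrixP => i j; rewrite mxE hs.
  split; first by apply/psdP.
  split => //; split => //.
  apply/matrixP => i k; rewrite (ord1 k) !mxE -he.
  by apply: eq_bigr => j _; rewrite !mxE mulr1.
Qed.

Lemma bil_sub_rank1 {R : realType} {n : nat} (X : 'M[R]_n) (x : 'cV[R]_n) v :
  bil (X - x *m x^T) v v = bil X v v - (\sum_i v i * x i 0) ^+ 2.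
Proof.
have -> : bil (X - x *m x^T) v v =
   bilF (fun i j => X i j + (-1) * (x i 0 * x j 0)) v v.
  rewrite /bil /bilF; apply: eq_bigr => i _; apply: eq_bigr => j _.
  rewrite !mxE big_ord1 !mxE; ring.
rewrite bilF_add bilF_scale bilF_rank1 expr2.
congr (_ + _); rewrite mulN1r; congr (- (_ * _)).
by apply: eq_bigr => j _; rewrite mulrC.
Qed.

Lemma TPfP {R : realType} {n : nat} (E : rel 'I_n) (X : 'M[R]_n) (x : 'cV[R]_n) :
  theta_plus_feasible E X x <->
  [/\ (forall i j, X i j = X j i),
      (forall v, (\sum_i v i * X i i) ^+ 2 <= bil X v v),
      (forall i, X i i = x i 0), (forall i j, E i j -> X i j = 0) &
      (forall i j, 0 <= X i j)].
Proof.
split.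
- case=> hT [/psdP [_ hp] [hd [he hn]]].
  have hx : forall i, X i i = x i 0.
    by move=> i; move/matrixP: hd => /(_ i 0); rewrite !mxE.
  split => //; first by move=> i j; rewrite -{1}hT mxE.
  move=> v; have := hp v; rewrite bil_sub_rank1 subr_ge0.
  congr (_ ^+ 2 <= _); apply: eq_bigr => i _; by rewrite hx.
- case=> hs hp hx he hn; split; first by apply/matrixP => i j; rewrite mxE hs.
  split.
    apply/psdP; split.
      by move=> i j; rewrite !mxE !big_ord1 !mxE hs mulrC.
    move=> v; rewrite bil_sub_rank1 subr_ge0.
    have := hp v; congr (_ ^+ 2 <= _); apply: eq_bigr => i _; by rewrite hx.
  split; first by apply/matrixP => i k; rewrite (ord1 k) !mxE hx.
  by split.
Qed.

Lemma frobE {R : realType} {n : nat} (E : rel 'I_n) (X : 'M[R]_n) :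
  frob (adjmx R E) X = \sum_i \sum_j (E i j)%:R * X i j.
Proof.
rewrite /frob /mxtrace exchange_big /=; apply: eq_bigr => i _.
by rewrite mxE; apply: eq_bigr => j _; rewrite !mxE.
Qed.

Lemma sum_pickl {R : realType} {n : nat} (F : 'I_n -> R) (j : 'I_n) :
  \sum_l (l == j)%:R * F l = F j.
Proof. rewrite -[RHS](sum_pick F j); apply: eq_bigr => l _; ring. Qed.

Lemma tp_diag {R : realType} {n : nat} {E : rel 'I_n} {X : 'M[R]_n} {x : 'cV[R]_n} i :
  theta_plus_feasible E X x -> 0 <= X i i <= 1.
Proof.
case/TPfP => hs hp hx he hn.
have := hp (fun k => (k == i)%:R).
rewrite /bil bilF_delta2 sum_pickl => h.
have h0 := hn i i; apply/andP; split => //; nra.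
Qed.

Lemma tp_trace_le {R : realType} {n : nat} (E : rel 'I_n) (X : 'M[R]_n) x :
  theta_plus_feasible E X x -> \tr X <= n%:R.
Proof.
move=> h; apply: (@le_trans _ _ (\sum_(i < n) (1:R))).
  by apply: ler_sum => i _; case/andP: (tp_diag i h).
by rewrite sumr_const card_ord.
Qed.

Lemma tp_trace_edge {R : realType} {n : nat} (E : rel 'I_n) (X : 'M[R]_n) x i j :
  simple_graph E -> E i j -> theta_plus_feasible E X x -> \tr X <= n%:R - 1.
Proof.
move=> [hsy hir] hij h.
have hji : E j i by rewrite hsy.
have nij : j != i by apply/eqP => eji; move: hij; rewrite eji hir.
have h' := h; case/TPfP: h' => hs hp hx he hn.
pose v := fun k : 'I_n => 1 * ((k == i)%:R : R) + 1 * (k == j)%:R.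
have := hp v.
rewrite /bil /v bilF_lin_l !bilF_lin_r !bilF_delta2 (he _ _ hij) (he _ _ hji).
have -> : \sum_i0 (1 * (i0 == i)%:R + 1 * (i0 == j)%:R) * X i0 i0 = X i i + X j j.
  under eq_bigr => k _ do rewrite !mul1r mulrDl.
  by rewrite big_split /= !sum_pickl.
move=> hs2.
have hsum : X i i + X j j <= 1.
  have := tp_diag i h; have := tp_diag j h; nra.
have : n%:R - \tr X = \sum_k (1 - X k k).
  rewrite sumrB sumr_const card_ord /mxtrace; done.
rewrite (bigD1 i) //= (bigD1 j) //= => htr.
have : 0 <= \sum_(k | (k != i) && (k != j)) (1 - X k k).
  apply: sumr_ge0 => k _; have := tp_diag k h; lra.
lra.
Qed.

Lemma sum_const_R {R : realType} {n : nat} (c : R) : \sum_(i < n) c = n%:R * c.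
Proof. by rewrite sumr_const card_ord mulr_natl. Qed.

Lemma sum_delta {R : realType} {n : nat} (k0 : 'I_n) : \sum_j ((j == k0)%:R : R) = 1.
Proof. by rewrite (bigD1 k0) //= eqxx big1 ?addr0 // => j /negbTE ->. Qed.

Lemma sum_delta' {R : realType} {n : nat} (k0 : 'I_n) : \sum_j ((k0 == j)%:R : R) = 1.
Proof. by rewrite (bigD1 k0) //= eqxx big1 ?addr0 // => j; rewrite eq_sym => /negbTE ->. Qed.

Lemma feas_t1 {R : realType} {n : nat} (k0 : 'I_n) :
  Q_feasible (1 : R) (\matrix_(i, j) ((i == k0)%:R * (j == k0)%:R)).
Proof.
apply/QfP; split.
- by move=> i j; rewrite !mxE mulrC.
- move=> v; rewrite bil_mx bilF_rank1.
  have -> : \sum_j (j == k0)%:R * v j = \sum_i v i * (i == k0)%:R :> R.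
    by apply: eq_bigr => j _; rewrite mulrC.
  by rewrite -expr2 sqr_ge0.
- by move=> i j; rewrite mxE mulr_ge0 ?ler0n.
- under eq_bigr => i _ do rewrite mxE.
  by rewrite sum_pick eqxx.
- move=> i; under eq_bigr => j _ do rewrite mxE.
  rewrite mxE -mulr_sumr sum_delta.
  by case: (eqVneq i k0) => _ /=; rewrite ?mulr0 ?mul0r ?mulr1.
Qed.

Lemma feas_gen {R : realType} {n : nat} (t : R) :
  (1 < n)%N -> 1 <= t -> t <= n%:R ->
  Q_feasible t (\matrix_(i, j) (t * (n%:R - t) / (n%:R * (n%:R - 1)) * (i == j)%:R
                       + t * (t - 1) / (n%:R * (n%:R - 1)) * 1 * 1) : 'M[R]_n).
Proof.
move=> hn ht0 htn.
set a := t * (n%:R - t) / (n%:R * (n%:R - 1)).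
set b := t * (t - 1) / (n%:R * (n%:R - 1)).
have hn1 : (1 : R) < n%:R by rewrite ltr1n.
have hnn : 0 < n%:R * (n%:R - 1) :> R by apply: mulr_gt0; lra.
have ha : 0 <= a by rewrite /a divr_ge0 ?mulr_ge0 //; lra.
have hb : 0 <= b by rewrite /b divr_ge0 ?mulr_ge0 //; lra.
apply/QfP; split.
- by move=> i j; rewrite !mxE eq_sym.
- move=> v; rewrite bil_mx.
  rewrite (bilF_add (fun i j => a * (i == j)%:R) (fun i j => (b * 1) * 1)).
  rewrite bilF_diag bilF_rank1; apply: addr_ge0.
    by apply: sumr_ge0 => i _; nra.
  rewrite -mulr_suml (eq_bigr (fun j => v j) (fun j _ => mul1r (v j))).
  set w := \sum_i v i; nra.
- by move=> i j; rewrite mxE !mulr1; apply: addr_ge0 => //; apply: mulr_ge0.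
- under eq_bigr => i _ do rewrite mxE eqxx mulr1 !mulr1.
  rewrite sum_const_R /a /b; field; lra.
- move=> i; under eq_bigr => j _ do rewrite mxE !mulr1.
  rewrite big_split /= -mulr_sumr sum_delta' sum_const_R mxE eqxx !mulr1 /a /b.
  field; lra.
Qed.

Lemma bilF_ext {R : realType} {n : nat} (F G : 'I_n -> 'I_n -> R) u v :
  (forall i j, F i j = G i j) -> bilF F u v = bilF G u v.
Proof. by move=> h; rewrite /bilF; apply: eq_bigr => i _; apply: eq_bigr => j _; rewrite h. Qed.

Lemma Q_cs {R : realType} {n : nat} (t : R) (X : 'M[R]_n) v :
  0 < t -> Q_feasible t X -> (\sum_i v i * X i i) ^+ 2 <= bil X v v.
Proof.
move=> ht /QfP [hs hp hn htr hrow].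
have := bilF_CS (fun i j => X i j) (fun _ => 1) v hs hp.
have -> : bilF (fun i j => X i j) (fun _ => 1) v = t * \sum_i v i * X i i.
  rewrite /bilF exchange_big /= mulr_sumr; apply: eq_bigr => j _.
  rewrite -mulr_suml.
  rewrite (eq_bigr (fun i => X j i)) ?hrow; first ring.
  by move=> i _; rewrite mul1r hs.
have -> : bilF (fun i j => X i j) (fun _ => 1) (fun _ => 1) = t * t.
  rewrite /bilF -{2}htr mulr_sumr; apply: eq_bigr => i _.
  rewrite -hrow; apply: eq_bigr => j _; ring.
rewrite /bil => h.
have ht2 : 0 < t * t by apply: mulr_gt0.
set a := \sum_i v i * X i i; set q := bilF (fun i j => X i j) v v.
have : t * t * a ^+ 2 <= t * t * q by move: h; rewrite exprMn [t ^+ 2]expr2.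
by rewrite ler_pM2l.
Qed.

Lemma bilF_le_mass {R : realType} {n : nat} (P : 'I_n -> 'I_n -> R) v :
  (forall i j, 0 <= P i j) ->
  bilF P v v <= (\sum_i \sum_j P i j) * \sum_k v k ^+ 2.
Proof.
move=> hP; rewrite /bilF mulr_suml; apply: ler_sum => i _.
rewrite mulr_suml; apply: ler_sum => j _.
set W := \sum_k v k ^+ 2.
have hi : v i ^+ 2 <= W by apply: (le_sum_term (fun k => v k ^+ 2)) => k; exact: sqr_ge0.
have hj : v j ^+ 2 <= W by apply: (le_sum_term (fun k => v k ^+ 2)) => k; exact: sqr_ge0.
have hij : v i * v j <= W by nra.
have := hP i j; nra.
Qed.

Lemma sum_sq_bound {R : realType} {n : nat} (v : 'I_n -> R) :
  (\sum_i v i) ^+ 2 <= n%:R * \sum_i v i ^+ 2.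
Proof.
pose F := fun i j : 'I_n => ((fun _ => (1 : R)) i) * (i == j)%:R.
have hs : forall i j, F i j = F j i by move=> i j; rewrite /F eq_sym.
have hp : forall w, 0 <= bilF F w w.
  move=> w; rewrite bilF_diag; apply: sumr_ge0 => i _; nra.
have := bilF_CS F (fun _ => 1) v hs hp.
rewrite !bilF_diag.
have -> : \sum_i 1 * 1 * v i = \sum_i v i by apply: eq_bigr => i _; ring.
have -> : \sum_(i < n) 1 * 1 * 1 = n%:R :> R by rewrite sum_const_R; ring.
have -> : \sum_i v i * 1 * v i = \sum_i v i ^+ 2 by apply: eq_bigr => i _; ring.
done.
Qed.

Local Open Scope classical_set_scope.

Definition tset (R : realType) (n : nat) (E : rel 'I_n) : set R :=
  [set v : R | exists (X : 'M[R]_n) (x : 'cV[R]_n),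
        theta_plus_feasible E X x /\ v = \tr X].

Arguments tset R {n} E.

Lemma tp_def (R : realType) (n : nat) (E : rel 'I_n) : theta_plus R E = sup (tset R E).
Proof. by []. Qed.

Lemma tset_ub (R : realType) (n : nat) (E : rel 'I_n) : ubound (tset R E) n%:R.
Proof. by move=> v [X [x [h ->]]]; apply: tp_trace_le h. Qed.

Lemma tset_ne (R : realType) (n : nat) (E : rel 'I_n) : tset R E !=set0.
Proof.
exists 0, 0, 0; split; last by rewrite mxtrace0.
apply/TPfP; split => //.
- by move=> i j; rewrite !mxE.
- move=> v.
  have -> : bil (0:'M[R]_n) v v = 0.
    by rewrite /bil /bilF big1 // => i _; rewrite big1 // => j _; rewrite mxE; ring.
  by rewrite big1 ?expr0n // => i _; rewrite mxE mulr0.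
- by move=> i; rewrite !mxE.
- by move=> i j _; rewrite mxE.
- by move=> i j; rewrite mxE.
Qed.

Lemma tp_ge (R : realType) (n : nat) (E : rel 'I_n) X x :
  theta_plus_feasible E X x -> \tr X <= theta_plus R E.
Proof.
move=> h; rewrite tp_def; apply: ub_le_sup; first by exists n%:R; exact: tset_ub.
by exists X, x.
Qed.

Lemma dir1 {R : realType} {n : nat} (E : rel 'I_n) (hG : simple_graph E)
  (t : R) (X : 'M[R]_n) (k : R) :
  1 <= t -> t <= n%:R -> Q_feasible t X -> 0 < k ->
  \sum_i \sum_j (E i j)%:R * X i j <= k ->
  t / (1 + 4 * n%:R * k) <= theta_plus R E.
Proof.
move=> ht1 htn hX hk hrk.
have hX' := hX; case/QfP: hX' => hs hp hn htr hrow.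
case: hG => hsy hir.
set rho := \sum_i \sum_j (E i j)%:R * X i j.
have hr0 : 0 <= rho.
  by apply: sumr_ge0 => i _; apply: sumr_ge0 => j _; rewrite mulr_ge0 ?ler0n.
have hn1 : 1 <= n%:R :> R by lra.
set g := rho + k.
set eta := g ^+ 2 * n%:R / k.
have hg0 : 0 < g by rewrite /g; lra.
have heta : 0 < eta by rewrite /eta divr_gt0 // mulr_gt0 // ?exprn_gt0 //; lra.
have hek : eta * k = g ^+ 2 * n%:R by rewrite /eta mulrVK // unitfE gt_eqF.
set lam := (1 + eta)^-1.
have hl : lam * (1 + eta) = 1 by rewrite /lam mulVf // gt_eqF //; lra.
have hl0 : 0 < lam by rewrite /lam invr_gt0; lra.
pose N := fun i j => if E i j then 0 else X i j.
pose Y := \matrix_(i, j) (lam * (N i j + g * (i == j)%:R)) : 'M[R]_n.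
pose y := \col_i (lam * (X i i + g)) : 'cV[R]_n.
have hYd : forall i, Y i i = lam * (X i i + g).
  by move=> i; rewrite mxE /N hir eqxx mulr1.
have hTP : theta_plus_feasible E Y y.
  apply/TPfP; split.
  - by move=> i j; rewrite !mxE /N (hsy i j) hs eq_sym.
  - move=> v.
    set a := \sum_i v i * X i i; set b := \sum_i v i; set W := \sum_i v i ^+ 2.
    have -> : \sum_i v i * Y i i = lam * (a + g * b).
      under eq_bigr => i _ do rewrite hYd.
      rewrite /a /b mulrDr mulrA !mulr_sumr -big_split /=.
      by apply: eq_bigr => i _; ring.
    have -> : bil Y v v = lam * (bilF N v v + g * W).
      rewrite /bil (bilF_ext _ (fun i j => lam * (N i j + g * (i == j)%:R))); last first.
        by move=> i j; rewrite mxE.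
      rewrite bilF_scale (bilF_add N (fun i j => (fun _ => g) i * (i == j)%:R)).
      rewrite bilF_diag /W mulr_sumr; congr (_ * (_ + _)).
      by apply: eq_bigr => i _; ring.
    have hXNP : bil X v v = bilF N v v + bilF (fun i j => (E i j)%:R * X i j) v v.
      rewrite /bil -bilF_add; apply: bilF_ext => i j; rewrite /N.
      by case: (E i j) => /=; rewrite ?mul1r ?mul0r ?add0r ?addr0.
    have F1 : a ^+ 2 <= bil X v v by apply: (@Q_cs R n t) => //; lra.
    have F2 : bilF (fun i j => (E i j)%:R * X i j) v v <= rho * W.
      by apply: bilF_le_mass => i j; rewrite mulr_ge0 ?ler0n.
    have F3 : b ^+ 2 <= n%:R * W by apply: sum_sq_bound.
    have hW : 0 <= W by apply: sumr_ge0 => i _; exact: sqr_ge0.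
    set bN := bilF N v v.
    have egW : g * W = rho * W + k * W by rewrite /g mulrDl.
    have hbN : a ^+ 2 + k * W <= bN + g * W.
      move: F1 F2; rewrite hXNP /bN; lra.
    have h1 : 0 <= eta * a ^+ 2 - 2 * a * g * b + k * W.
      have : 0 <= eta * (eta * a ^+ 2 - 2 * a * g * b + k * W).
        have e : eta * (eta * a ^+ 2 - 2 * a * g * b + k * W)
          = (eta * a - g * b) ^+ 2 + g ^+ 2 * (n%:R * W - b ^+ 2).
          by rewrite mulrDr (mulrA eta k) hek; ring.
        rewrite e; apply: addr_ge0; first exact: sqr_ge0.
        apply: mulr_ge0; [exact: sqr_ge0| lra].
      by rewrite pmulr_rge0.
    have h2 : (a + g * b) ^+ 2 <= (1 + eta) * (a ^+ 2 + k * W).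
      have : 0 <= g ^+ 2 * (n%:R * W - b ^+ 2) by apply: mulr_ge0; [exact: sqr_ge0| lra].
      have e2 : eta * k * W = g ^+ 2 * n%:R * W by rewrite hek.
      nra.
    have h3 : (lam * (a + g * b)) ^+ 2 <= lam * (a ^+ 2 + k * W).
      rewrite exprMn.
      have e3 : lam * (a ^+ 2 + k * W) = lam ^+ 2 * ((1 + eta) * (a ^+ 2 + k * W)).
        by rewrite mulrA expr2 -(mulrA lam lam) hl mulr1.
      rewrite e3; apply: ler_wpM2l => //; exact: sqr_ge0.
    apply: (le_trans h3); apply: ler_wpM2l => //; exact: ltW.
  - by move=> i; rewrite hYd mxE.
  - move=> i j hij; rewrite mxE /N hij.
    have -> : (i == j) = false by apply/eqP => e; move: hij; rewrite e hir.
    by rewrite mulr0 addr0 mulr0.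
  - move=> i j; rewrite mxE; apply: mulr_ge0; first exact: ltW.
    apply: addr_ge0; last by apply: mulr_ge0; rewrite ?ler0n //; lra.
    by rewrite /N; case: (E i j).
have htrY : \tr Y = lam * (t + n%:R * g).
  rewrite /mxtrace (eq_bigr _ (fun i _ => hYd i)) -mulr_sumr big_split /= htr.
  by rewrite sum_const_R.
have := @tp_ge R n E Y y hTP; rewrite htrY => hle.
apply: le_trans hle.
have hden : 0 < 1 + 4 * n%:R * k by have := mulr_gt0 (mulr_gt0 (ltr0Sn _ 3) (lt_le_trans ltr01 hn1)) hk; lra.
rewrite ler_pdivrMr //.
have hrk2 : rho <= k by [].
have hg : g <= 2 * k by rewrite /g; lra.
have heta4 : eta <= 4 * n%:R * k.
  have : eta * k <= 4 * n%:R * k * k.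
    rewrite hek; have : g ^+ 2 <= 4 * k ^+ 2 by nra.
    nra.
  by rewrite ler_pM2r.
have h4 : lam * (1 + eta) <= lam * (1 + 4 * n%:R * k).
  by apply: ler_wpM2l; [exact: ltW | lra].
rewrite hl in h4.
have : 0 <= n%:R * g by apply: mulr_ge0; lra.
rewrite mulrAC; nra.
Qed.

Local Open Scope classical_set_scope.

Lemma amgm_abs {R : realType} (p q r : R) : 0 <= q -> 0 <= r -> p ^+ 2 <= q * r ->
  2 * p <= q + r.
Proof.
move=> hq hr h; case: (lerP p 0) => hp; first lra.
have hqr : 0 <= (q - r) ^+ 2 by exact: sqr_ge0.
have h4 : (2 * p) ^+ 2 <= (q + r) ^+ 2 by nra.
rewrite leNgt; apply/negP => hlt.
have : (q + r) ^+ 2 < (2 * p) ^+ 2.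
  rewrite !expr2; apply: (le_lt_trans (y := (q + r) * (2 * p))).
    apply: ler_wpM2l; [lra | exact: ltW].
  by rewrite ltr_pM2r; lra.
lra.
Qed.

Lemma sum_avg {R : realType} {n : nat} (a : 'I_n -> R) :
  \sum_i \sum_j (a i + a j) / 2 = n%:R * \sum_i a i.
Proof.
rewrite (eq_bigr (fun i => n%:R * (a i / 2) + (\sum_j a j) / 2)); last first.
  move=> i _; rewrite mulr_suml -sum_const_R -big_split /=.
  by apply: eq_bigr => j _; rewrite mulrDl.
rewrite big_split /= sum_const_R -mulr_sumr -mulr_suml; field.
  by [].
Qed.

Lemma approx_eig {R : realType} {n : nat} (E : rel 'I_n) (Y : 'M[R]_n) (y : 'cV[R]_n) (eps : R) :
  theta_plus_feasible E Y y -> 0 < \tr Y -> 0 < eps ->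
  exists (s : 'I_n -> R) (lam : R),
    [/\ (forall i, 0 <= s i), 0 < \sum_i Y i i * s i ^+ 2, \tr Y <= lam &
     forall i, lam * Y i i * s i ^+ 2 - eps * (\sum_k Y k k * s k ^+ 2)
               <= s i * \sum_j Y i j * s j].
Proof.
move=> hTP htr heps.
have hTP' := hTP; case/TPfP: hTP' => hs hp hx he hn.
pose c := fun s : 'I_n -> R => \sum_i Y i i * s i ^+ 2.
have hc0 : forall s, 0 <= c s.
  by move=> s; apply: sumr_ge0 => i _; apply: mulr_ge0 => //; exact: sqr_ge0.
have hpsd : forall w, 0 <= bil Y w w.
  by move=> w; apply: le_trans (hp w); exact: sqr_ge0.
have hY2 : forall i j, Y i j ^+ 2 <= Y i i * Y j j.
  move=> i j; have := bilF_CS (fun i j => Y i j) (fun k => (k == i)%:R) (fun k => (k == j)%:R) hs hpsd.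
  by rewrite !bilF_delta2.
have G1 : forall s, bil Y s s <= n%:R * c s.
  move=> s.
  have : bil Y s s <= \sum_i \sum_j (Y i i * s i ^+ 2 + Y j j * s j ^+ 2) / 2.
    rewrite /bil /bilF; apply: ler_sum => i _; apply: ler_sum => j _.
    have hq := mulr_ge0 (hn i i) (sqr_ge0 (s i)).
    have hr := mulr_ge0 (hn j j) (sqr_ge0 (s j)).
    have h2 : (s i * Y i j * s j) ^+ 2 <= (Y i i * s i ^+ 2) * (Y j j * s j ^+ 2).
      have := hY2 i j; have := sqr_ge0 (s i); have := sqr_ge0 (s j).
      rewrite !exprMn => h1 h2' h3.
      have -> : Y i i * s i ^+ 2 * (Y j j * s j ^+ 2) = (s i ^+ 2 * s j ^+ 2) * (Y i i * Y j j) by ring.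
      have -> : s i ^+ 2 * Y i j ^+ 2 * s j ^+ 2 = (s i ^+ 2 * s j ^+ 2) * Y i j ^+ 2 by ring.
      by apply: ler_wpM2l => //; apply: mulr_ge0.
    have := amgm_abs _ _ _ hq hr h2; lra.
  have -> : \sum_i \sum_j (Y i i * s i ^+ 2 + Y j j * s j ^+ 2) / 2 = n%:R * c s.
    by rewrite sum_avg.
  done.
pose L := [set r : R | exists s, 0 < c s /\ r = bil Y s s / c s].
have hL1 : L (bil Y (fun _ => 1) (fun _ => 1) / c (fun _ => 1)).
  exists (fun _ => 1); split => //.
  by rewrite /c (eq_bigr (fun i => Y i i)) // => i _; rewrite expr1n mulr1.
have hc1 : c (fun _ => 1) = \tr Y.
  by rewrite /c /mxtrace; apply: eq_bigr => i _; rewrite expr1n mulr1.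
have hLub : ubound L n%:R.
  move=> r [s [hcs ->]]; rewrite ler_pdivrMr //; exact: G1.
have hLhas : has_ubound L by exists n%:R.
set lam := sup L.
have hlam : \tr Y <= lam.
  apply: le_trans (ub_le_sup hLhas hL1).
  rewrite hc1 ler_pdivlMr //.
  have := hp (fun _ => 1).
  rewrite (eq_bigr (fun i => Y i i)) ?expr2 //; last by move=> i _; rewrite mul1r.
have G2 : forall s, bil Y s s <= lam * c s.
  move=> s; have := hc0 s; rewrite le_eqVlt => /orP [/eqP hcs|hcs].
    by have := G1 s; rewrite -hcs !mulr0.
  have : bil Y s s / c s <= lam by apply: ub_le_sup => //; exists s.
  by rewrite ler_pdivrMr.
have hlam0 : 0 < lam by apply: lt_le_trans hlam.
set eta := eps ^+ 2 / lam.
have heta : 0 < eta by rewrite /eta divr_gt0 // exprn_gt0.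
have hleta : lam * eta = eps ^+ 2 by rewrite /eta mulrC divfK // gt_eqF.
have : lam - eta < sup L by rewrite -/lam; lra.
case/(sup_gt (ex_intro _ _ hL1)) => r [s0 [hcs0 ->]] hr.
pose s := fun i => `|s0 i|.
have hcs : c s = c s0.
  by apply: eq_bigr => i _; rewrite /s real_normK // num_real.
have hbs : bil Y s0 s0 <= bil Y s s.
  apply: ler_sum => i _; apply: ler_sum => j _; rewrite /s.
  apply: le_trans (ler_norm _) _.
  by rewrite !normrM (ger0_norm (hn i j)).
have hgt : (lam - eta) * c s < bil Y s s.
  rewrite hcs; apply: lt_le_trans hbs; by rewrite -ltr_pdivlMr.
pose M := fun i j => lam * (Y i i * (i == j)%:R) + (-1) * Y i j.
have hM : forall u v, bilF M u v = lam * (\sum_i u i * Y i i * v i) - bil Y u v.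
  move=> u v; rewrite /M.
  rewrite (bilF_add (fun i j => lam * (Y i i * (i == j)%:R)) (fun i j => (-1) * Y i j)).
  rewrite !bilF_scale (bilF_diag (fun i => Y i i)) /bil; ring.
have hMs : forall i j, M i j = M j i.
  move=> i j; rewrite /M hs eq_sym; case: (eqVneq j i) => [->|_] //.
  by rewrite !mulr0.
have hMp : forall w, 0 <= bilF M w w.
  move=> w; rewrite hM subr_ge0.
  have -> : \sum_i w i * Y i i * w i = c w by apply: eq_bigr => i _; ring.
  exact: G2.
set Bs := bilF M s s.
have hBs0 : 0 <= Bs by apply: hMp.
have hBs : Bs <= eta * c s.
  rewrite /Bs hM.
  have -> : \sum_i s i * Y i i * s i = c s by apply: eq_bigr => i _; ring.
  lra.
exists s, lam; split => //.
- by move=> i; rewrite /s normr_ge0.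
- by rewrite -/(c s) hcs.
move=> i; rewrite -/(c s).
set cs := c s.
set Ys := \sum_j Y i j * s j.
have hCS := bilF_CS M (fun k => (k == i)%:R) s hMs hMp.
rewrite bilF_delta2 hM /bil bilF_delta in hCS.
have e1 : \sum_i0 (i0 == i)%:R * Y i0 i0 * s i0 = Y i i * s i.
  by rewrite -(sum_pickl (fun k => Y k k * s k)); apply: eq_bigr => k _; ring.
rewrite e1 -/Ys -/Bs in hCS.
have hMii : M i i <= lam * Y i i.
  rewrite /M eqxx mulr1; have := hn i i; lra.
have hYi := hn i i.
have hsc : Y i i * s i ^+ 2 <= cs.
  by apply: (le_sum_term (fun k => Y k k * s k ^+ 2)) => k; apply: mulr_ge0 => //; exact: sqr_ge0.
set ri := lam * (Y i i * s i) - Ys.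
have h1 : ri ^+ 2 <= lam * Y i i * (eta * cs).
  apply: (le_trans hCS); apply: (le_trans (ler_wpM2r hBs0 hMii)).
  apply: ler_wpM2l => //; apply: mulr_ge0 => //; exact: ltW.
have h2 : (s i * ri) ^+ 2 <= (eps * cs) ^+ 2.
  rewrite !exprMn.
  have hsi := sqr_ge0 (s i).
  have : s i ^+ 2 * ri ^+ 2 <= s i ^+ 2 * (lam * Y i i * (eta * cs)) by apply: ler_wpM2l.
  have -> : s i ^+ 2 * (lam * Y i i * (eta * cs)) = (lam * eta) * (Y i i * s i ^+ 2) * cs by ring.
  rewrite hleta => h3; apply: (le_trans h3).
  have hcz : 0 <= cs by apply: hc0.
  have hE := mulr_ge0 (sqr_ge0 eps) hcz.
  have hd : 0 <= cs - Y i i * s i ^+ 2 by lra.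
  have := mulr_ge0 hE hd; rewrite [cs ^+ 2]expr2; nra.
have h4 : s i * ri <= eps * cs.
  have hcz : 0 <= cs by apply: hc0.
  have hep : 0 <= eps * cs by apply: mulr_ge0 => //; exact: ltW.
  rewrite leNgt; apply/negP => hlt.
  have : (eps * cs) ^+ 2 < (s i * ri) ^+ 2.
    rewrite !expr2; apply: (le_lt_trans (y := (eps * cs) * (s i * ri))).
      by apply: ler_wpM2l => //; exact: ltW.
    by rewrite ltr_pM2r; lra.
  lra.
have -> : s i * Ys = lam * Y i i * s i ^+ 2 - s i * ri by rewrite /ri; ring.
lra.
Qed.

Lemma build {R : realType} {n : nat} (E : rel 'I_n) (hG : simple_graph E)
  (Y : 'M[R]_n) (y : 'cV[R]_n) (s : 'I_n -> R) (t th : R) :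
  theta_plus_feasible E Y y -> (forall i, 0 <= s i) ->
  0 < \sum_i Y i i * s i ^+ 2 -> 1 < t -> t < n%:R -> 0 < th ->
  (forall i, - th * (\sum_k Y k k * s k ^+ 2) <= s i * (\sum_j Y i j * s j) - t * Y i i * s i ^+ 2) ->
  exists X, Q_feasible t X /\
    2^-1 * frob (adjmx R E) X <= th * (t * n%:R ^+ 2 / (n%:R - t)).
Proof.
move=> hTP hs0 hc ht1 htn hth hq.
have hTP' := hTP; case/TPfP: hTP' => hs hp hx he hn.
case: hG => hsy hir.
set c := \sum_k Y k k * s k ^+ 2.
have hc2 : 0 < c by [].
have hnt : 0 < n%:R - t by lra.
set beta := th * c / (n%:R - t).
have hbeta : 0 <= beta by rewrite /beta divr_ge0 // ?mulr_ge0 //; lra.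
have hbn : beta * (n%:R - t) = th * c by rewrite /beta divfK // gt_eqF.
pose q := fun i => s i * (\sum_j Y i j * s j) - t * Y i i * s i ^+ 2.
pose dl := fun i => (q i + th * c) / (t - 1).
have hdl : forall i, 0 <= dl i.
  move=> i; rewrite /dl divr_ge0 //; last lra.
  have := hq i; rewrite -/c /q; lra.
have hdl2 : forall i, dl i * (t - 1) = q i + th * c.
  by move=> i; rewrite /dl divfK // gt_eqF //; lra.
pose X' := fun i j => s i * Y i j * s j + beta * 1 * 1 + dl i * (i == j)%:R.
set T := \sum_i X' i i.
have hT : c <= T.
  rewrite /T /c; apply: ler_sum => i _; rewrite /X' eqxx !mulr1.
  have := hdl i; nra.
have hT0 : 0 < T by lra.
pose X := \matrix_(i, j) (t / T * X' i j) : 'M[R]_n.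
have htT : 0 <= t / T by rewrite divr_ge0 //; lra.
exists X; split.
- apply/QfP; split.
  + by move=> i j; rewrite !mxE /X' hs eq_sym; congr (_ * (_ + _ + _)); [ring|case: eqVneq => [->|]; rewrite ?mulr0].
  + move=> v; rewrite bil_mx bilF_scale; apply: mulr_ge0 => //.
    rewrite /X' (bilF_add (fun i j => s i * Y i j * s j + beta * 1 * 1) (fun i j => dl i * (i == j)%:R)).
    rewrite (bilF_add (fun i j => s i * Y i j * s j) (fun i j => (beta * 1) * 1)).
    rewrite bilF_conj bilF_rank1 bilF_diag.
    apply: addr_ge0; first apply: addr_ge0.
    * by have := hp (fun i => s i * v i); apply: le_trans; exact: sqr_ge0.
    * rewrite -mulr_suml.
      have -> : \sum_j 1 * v j = \sum_i v i by apply: eq_bigr => j _; ring.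
      set w := \sum_i v i; have := sqr_ge0 w; rewrite mulr1; nra.
    * by apply: sumr_ge0 => i _; have := hdl i; nra.
  + move=> i j; rewrite mxE; apply: mulr_ge0 => //; rewrite /X'.
    apply: addr_ge0; first apply: addr_ge0.
    * by apply: mulr_ge0; [apply: mulr_ge0|].
    * by rewrite !mulr1.
    * by apply: mulr_ge0 => //.
  + under eq_bigr => i _ do rewrite mxE.
    by rewrite -mulr_sumr -/T divfK // gt_eqF.
  + move=> i; under eq_bigr => j _ do rewrite mxE.
    rewrite -mulr_sumr mxE.
    have -> : \sum_j X' i j = s i * (\sum_j Y i j * s j) + n%:R * beta + dl i.
      rewrite /X' big_split big_split /= sum_const_R -mulr_sumr sum_delta' !mulr1.
      by rewrite mulr_sumr; congr (_ + _ + _); apply: eq_bigr => j _; ring.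
    rewrite /X' eqxx !mulr1.
    have := hdl2 i; rewrite /q => e.
    have e2 : s i * (\sum_j Y i j * s j) + n%:R * beta + dl i
        = t * (s i * Y i i * s i + beta + dl i).
      have := hbn; lra.
    rewrite e2; ring.
- rewrite frobE.
  have -> : \sum_i \sum_j (E i j)%:R * X i j = t / T * beta * \sum_i \sum_j (E i j)%:R.
    rewrite mulr_sumr; apply: eq_bigr => i _; rewrite mulr_sumr; apply: eq_bigr => j _.
    rewrite mxE /X'; case hij: (E i j); last by rewrite !mul0r mulr0.
    rewrite he // (_ : (i == j) = false); last by apply/eqP => e; move: hij; rewrite e hir.
    by rewrite mulr0 mul0r !mulr0 !add0r addr0 !mulr1 mul1r.
  have hA : \sum_i \sum_j ((E i j)%:R : R) <= n%:R ^+ 2.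
    apply: (le_trans (y := \sum_(i < n) \sum_(j < n) (1 : R))).
      apply: ler_sum => i _; apply: ler_sum => j _; by case: (E i j).
    by rewrite sum_const_R (eq_bigr (fun _ => n%:R * 1)) ?sum_const_R ?mulr1 ?expr2 // => i _; rewrite sum_const_R.
  have hA0 : 0 <= \sum_i \sum_j ((E i j)%:R : R).
    by apply: sumr_ge0 => i _; apply: sumr_ge0 => j _; rewrite ler0n.
  have htb : t / T * beta <= th * t / (n%:R - t).
    have e : t / T * beta = th * t / (n%:R - t) * (c / T).
      by rewrite /beta; field; apply/andP; split; rewrite gt_eqF.
    have hcT : c / T <= 1 by rewrite ler_pdivrMr // mul1r.
    have hK : 0 <= th * t / (n%:R - t) by rewrite divr_ge0 //; [apply: mulr_ge0|]; lra.
    have hcT0 : 0 <= c / T by rewrite divr_ge0 //; lra.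
    rewrite e; nra.
  have hint : 0 <= t / T * beta by apply: mulr_ge0.
  have : t / T * beta * \sum_i \sum_j ((E i j)%:R : R) <= th * t / (n%:R - t) * n%:R ^+ 2.
    apply: le_trans (ler_wpM2r hA0 htb) _.
    apply: ler_wpM2l => //; rewrite divr_ge0 //; [apply: mulr_ge0|]; lra.
  have -> : th * (t * n%:R ^+ 2 / (n%:R - t)) = th * t / (n%:R - t) * n%:R ^+ 2 by ring.
  set Z := t / T * beta * _; move=> hZ.
  have : 0 <= Z by apply: mulr_ge0.
  lra.
Qed.

Local Open Scope classical_set_scope.

Definition Sset (R : realType) (n : nat) (E : rel 'I_n) (t : R) : set R :=
  [set v : R | exists X : 'M[R]_n,
        Q_feasible t X /\ v = 2^-1 * frob (adjmx R E) X].
Arguments Sset R {n} E t.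

Lemma S_def (R : realType) (n : nat) (E : rel 'I_n) t : S_val R E t = inf (Sset R E t).
Proof. by []. Qed.

Lemma obj_ge0 {R : realType} {n : nat} (E : rel 'I_n) (t : R) X :
  Q_feasible t X -> 0 <= 2^-1 * frob (adjmx R E) X.
Proof.
case/QfP => _ _ hn _ _; rewrite frobE; apply: mulr_ge0; first by rewrite invr_ge0.
by apply: sumr_ge0 => i _; apply: sumr_ge0 => j _; rewrite mulr_ge0 ?ler0n.
Qed.

Lemma S_le {R : realType} {n : nat} (E : rel 'I_n) (t : R) X :
  Q_feasible t X -> S_val R E t <= 2^-1 * frob (adjmx R E) X.
Proof.
move=> hX; rewrite S_def; apply: ge_inf; last by exists X.
by exists 0 => v [Y [hY ->]]; apply: obj_ge0 hY.
Qed.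

Lemma feas_exists {R : realType} {n : nat} (t : R) :
  1 <= t -> t <= n%:R -> exists X : 'M[R]_n, Q_feasible t X.
Proof.
move=> ht1 htn; case: (ltrP 1 t) => ht.
- have hn : (1 < n)%N by rewrite -(ltr_nat R); lra.
  by eexists; apply: feas_gen.
- have -> : t = 1 by lra.
  have hn : (0 < n)%N by rewrite -(ltr_nat R); lra.
  by eexists; apply: (feas_t1 (Ordinal hn)).
Qed.

Lemma thp_ge0 {R : realType} {n : nat} (E : rel 'I_n) : 0 <= theta_plus R E.
Proof.
rewrite tp_def.
have hub : has_ubound (tset R E) by exists n%:R; exact: tset_ub.
apply: (ub_le_sup hub).
exists 0, 0; split; last by rewrite mxtrace0.
apply/TPfP; split => //.
- by move=> i j; rewrite !mxE.
- move=> w.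
  have -> : bil (0:'M[R]_n) w w = 0.
    by rewrite /bil /bilF big1 // => i _; rewrite big1 // => j _; rewrite mxE; ring.
  by rewrite big1 ?expr0n // => i _; rewrite mxE mulr0.
- by move=> i; rewrite !mxE.
- by move=> i j _; rewrite mxE.
- by move=> i j; rewrite mxE.
Qed.

Theorem mainTheorem12 (R : realType) (n : nat) (E : rel 'I_n)
  (hG : simple_graph E) (t : R) (ht1 : 1 <= t) (htn : t <= n%:R) :
  0 < S_val R E t <-> theta_plus R E < t.
Proof.
have hG' := hG; case: hG' => hsy hir.
split.
- move=> hS; rewrite ltNge; apply/negP => htp.
  suff : S_val R E t <= 0 by lra.
  case: (ltrP 1 t) => ht; last first.
    have et : t = 1 by lra.
    have hn : (0 < n)%N by rewrite -(ltr_nat R); lra.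
    have hX := feas_t1 (R := R) (Ordinal hn).
    rewrite et; apply: (le_trans (S_le E _ _ hX)).
    rewrite frobE big1 ?mulr0 // => i _; rewrite big1 // => j _.
    rewrite mxE; case: (eqVneq i (Ordinal hn)) => [->|_]; last by rewrite !mul0r mulr0.
    case: (eqVneq j (Ordinal hn)) => [->|_]; last by rewrite !mulr0.
    by rewrite hir mul0r.
  have hn2 : (1 < n)%N by rewrite -(ltr_nat R); lra.
  case: (boolP [exists i, [exists j, E i j]]) => hE; last first.
    have [X hX] := @feas_exists R n t ht1 htn.
    apply: (le_trans (S_le E _ _ hX)); rewrite frobE big1 ?mulr0 // => i _.
    rewrite big1 // => j _; case hij: (E i j); last by rewrite mul0r.
    by move: hE; rewrite negb_exists => /forallP /(_ i); rewrite negb_exists => /forallP /(_ j); rewrite hij.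
  case/existsP: hE => i0 /existsP [j0 hij0].
  have hthn : theta_plus R E <= n%:R - 1.
    rewrite tp_def; apply: ge_sup; first exact: tset_ne.
    by move=> v [X [x [hX ->]]]; exact: (@tp_trace_edge R n E X x i0 j0 hG hij0 hX).
  have htn' : t < n%:R by lra.
  set K := t * n%:R ^+ 2 / (n%:R - t).
  have hK : 0 < K by rewrite /K divr_gt0 // ?mulr_gt0 ?exprn_gt0 //; lra.
  rewrite leNgt; apply/negP => hS0.
  set th := S_val R E t / (K + S_val R E t).
  have hth : 0 < th by rewrite /th divr_gt0 //; lra.
  have hth1 : th < 1 by rewrite /th ltr_pdivrMr; lra.
  have hthK : th * K < S_val R E t.
    rewrite /th mulrAC ltr_pdivrMr; last lra.
    nra.
  have : t - th / 2 < sup (tset R E) by rewrite -tp_def; lra.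
  case/(sup_gt (tset_ne R n E)) => _ [Y [y [hY ->]]] htrY.
  have htrY0 : 0 < \tr Y by lra.
  have [s [lam [hs0 hc hlam hsi]]] := @approx_eig R n E Y y (th / 2) hY htrY0 (ltac:(lra)).
  have [X [hX hobj]] : exists X, Q_feasible t X /\
      2^-1 * frob (adjmx R E) X <= th * K.
    apply: (@build R n E hG Y y s t th hY hs0 hc ht htn' hth) => i.
    have := hsi i; set c := \sum_k Y k k * s k ^+ 2 => h1.
    have hYs : 0 <= Y i i * s i ^+ 2.
      by apply: mulr_ge0; [case/TPfP: hY => _ _ _ _ hn; exact: hn | exact: sqr_ge0].
    have hsc : Y i i * s i ^+ 2 <= c.
      apply: (le_sum_term (fun k => Y k k * s k ^+ 2)) => k.
      by apply: mulr_ge0; [case/TPfP: hY => _ _ _ _ hn; exact: hn | exact: sqr_ge0].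
    have h2 : (t - th / 2) * (Y i i * s i ^+ 2) <= lam * (Y i i * s i ^+ 2).
      by apply: ler_wpM2r => //; lra.
    have h3 : th / 2 * (Y i i * s i ^+ 2) <= th / 2 * c.
      by apply: ler_wpM2l => //; lra.
    rewrite !mulrA in h1 h2 h3 *; lra.
  have := le_trans (S_le E _ _ hX) hobj; lra.
- move=> hlt; rewrite ltNge; apply/negP => hS.
  have hth0 := @thp_ge0 R n E.
  set tp := theta_plus R E in hlt hth0 *.
  have hn1 : 1 <= n%:R :> R by lra.
  set k := (t - tp) / (4 * n%:R * t).
  have hk : 0 < k by rewrite /k divr_gt0 //; [lra | apply: mulr_gt0; [apply: mulr_gt0|]; lra].
  have : S_val R E t < k / 2 by lra.
  rewrite S_def => /(inf_lt _) [].
    by have [X hX] := @feas_exists R n t ht1 htn; exists (2^-1 * frob (adjmx R E) X), X.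
  move=> _ [X [hX ->]] hobj.
  have hrk : \sum_i \sum_j (E i j)%:R * X i j <= k.
    move: hobj; rewrite frobE; lra.
  have := @dir1 R n E hG t X k ht1 htn hX hk hrk; rewrite -/tp => hle.
  have e : 4 * n%:R * k = (t - tp) / t by rewrite /k; field; apply/andP; split; rewrite gt_eqF //; lra.
  rewrite e ler_pdivrMr in hle; last first.
    have : 0 <= (t - tp) / t by rewrite divr_ge0; lra.
    lra.
  have e2 : (t - tp) / t * t = t - tp by rewrite divfK // gt_eqF //; lra.
  have : t * t <= tp * (1 + (t - tp) / t) * t by apply: ler_wpM2r; lra.
  rewrite -mulrA mulrDl mul1r e2 => h.
  nra.
Qed.
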